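(* Let $\lambda$ be a nonzero real number and $n$ a positive integer. Then, for real $x$, $$(1+x)F_{n,\lambda}(x)=\sum_{k=1}^{n+1}S_{2,\lambda}(n+1,k)(k-1)!\,x^{k}+n\lambda\sum_{k=1}^{n}S_{2,\lambda}(n,k)(k-1)!\,x^{k}.$$ Moreover, $$\int_{0}^{x}\frac{F_{n+1,\lambda}(t)}{t}\,dt+n\lambda\int_{0}^{x}\frac{F_{n,\lambda}(t)}{t}\,dt=(1+x)F_{n,\lambda}(x).$$
   Context: For real $y$ and integer $k\ge0$: $(y)_{0,\lambda}=1$, $(y)_{k,\lambda}=y(y-\lambda)\cdots(y-(k-1)\lambda)$; $(y)_0=1$, $(y)_k=y(y-1)\cdots(y-k+1)$. The degenerate exponential is $e_\lambda(t)=\sum_{k\ge0}(1)_{k,\lambda}t^k/k!=(1+\lambda t)^{1/\lambda}$. The degenerate Stirling numbers of the second kind are defined by $(x)_{n,\lambda}=\sum_{k=0}^{n}S_{2,\lambda}(n,k)(x)_{k}$ ($n\ge0$). The degenerate Fubini polynomials are defined by $\frac{1}{1-x(e_\lambda(t)-1)}=\sum_{n\ge0}F_{n,\lambda}(x)\frac{t^n}{n!}$; equivalently $F_{n,\lambda}(x)=\sum_{k=0}^{n}S_{2,\lambda}(n,k)k!\,x^k$. *)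

(* Defs.v *)
From Stdlib Require Import Reals Lra Lia Factorial.
From Coquelicot Require Import Coquelicot.
Open Scope R_scope.

Fixpoint dfall (y lam : R) (k : nat) : R :=
  match k with
  | O => 1
  | S k' => dfall y lam k' * (y - INR k' * lam)
  end.

Definition fall (y : R) (k : nat) : R := dfall y 1 k.

(* degenerate Stirling numbers of the second kind S_{2,lam}(n,k), given by the
   recurrence  S(n+1,k) = S(n,k-1) + (k - n lam) S(n,k),  S(0,0)=1,
   S(0,k+1)=0, S(n+1,0)=0, which is equivalent to the defining expansion
   (x)_{n,lam} = sum_{k=0}^n S(n,k) (x)_k  (see lemma S2_def below). *)
Fixpoint S2 (lam : R) (n k : nat) : R :=
  match n, k with
  | O, O => 1
  | O, S _ => 0
  | S _, O => 0
  | S n', S k' => S2 lam n' k' + (INR (S k') - INR n' * lam) * S2 lam n' (S k')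
  end.

Definition Fub (lam : R) (n : nat) (x : R) : R :=
  sum_n (fun k => S2 lam n k * INR (fact k) * x ^ k) n.

Lemma S2_high lam n k : (n < k)%nat -> S2 lam n k = 0.
Proof.
  revert k; induction n as [|n IH]; intros [|k] H; simpl; try lia; try reflexivity.
  rewrite IH by lia. rewrite IH by lia. ring.
Qed.

Lemma sum_shift (a : nat -> R) n :
  sum_f_R0 a (S n) = a 0%nat + sum_f_R0 (fun k => a (S k)) n.
Proof.
  induction n as [|n IH]; simpl in *. ring. rewrite IH. ring.
Qed.

Lemma S2_def (lam x : R) (n : nat) :
  dfall x lam n = sum_n (fun k => S2 lam n k * fall x k) n.
Proof.
  rewrite sum_n_Reals.
  induction n as [|n IH]. simpl. unfold fall; simpl. ring.
  simpl dfall. rewrite IH. rewrite sum_shift. simpl S2 at 1.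
  rewrite Rmult_0_l, Rplus_0_l.
  rewrite Rmult_comm, scal_sum.
  transitivity (sum_f_R0 (fun k => S2 lam n k * fall x (S k)) n
               + sum_f_R0 (fun k => (INR k - INR n * lam) * S2 lam n k * fall x k) n).
  { rewrite <- plus_sum. apply sum_eq. intros i _.
    unfold fall; simpl. ring. }
  transitivity (sum_f_R0 (fun k => S2 lam n k * fall x (S k)) n
               + sum_f_R0 (fun k => (INR (S k) - INR n * lam) * S2 lam n (S k) * fall x (S k)) n).
  { f_equal. destruct n as [|m].
    - simpl. ring.
    - rewrite sum_shift. simpl S2 at 1. simpl INR at 1.
      rewrite tech5. rewrite (S2_high lam (S m) (S (S m))) by lia.
      simpl S2 at 1. rewrite Rmult_0_r, Rmult_0_l, Rplus_0_l, Rmult_0_r, Rmult_0_l, Rplus_0_r.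
      reflexivity. }
  rewrite <- plus_sum. apply sum_eq. intros i _.
  change (S2 lam (S n) (S i)) with (S2 lam n i + (INR (S i) - INR n * lam) * S2 lam n (S i)). ring.
Qed.

(* Main.v *)
Require Import Defs.
From Stdlib Require Import Reals Factorial Lra Lia.
From Coquelicot Require Import Coquelicot.
Open Scope R_scope.

Lemma term_int (c : R) (k : nat) (x : R) : (1 <= k)%nat ->
  is_RInt (fun t => c * INR k * t ^ (k - 1)) 0 x (c * x ^ k).
Proof.
  intros Hk.
  replace (c * x ^ k) with (minus ((fun t => c * t ^ k) x) ((fun t => c * t ^ k) 0)).
  2:{ simpl. rewrite pow_i by lia. unfold minus, plus, opp; simpl. ring. }
  apply (is_RInt_derive (V:=R_CompleteNormedModule) (fun t => c * t^k)).
  - intros t _. auto_derive. auto. replace (k-1)%nat with (Init.Nat.pred k) by lia. ring.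
  - intros t _. apply (ex_derive_continuous (K:=R_AbsRing) (V:=R_NormedModule)). auto_derive. auto.
Qed.

Lemma poly_int (a : nat -> R) (x : R) (m : nat) :
  is_RInt (fun t => sum_n_m (fun k => a k * INR k * t ^ (k - 1)) 1 m) 0 x
          (sum_n_m (fun k => a k * x ^ k) 1 m).
Proof.
  induction m as [|m IH].
  - rewrite sum_n_m_zero by lia.
    assert (H := is_RInt_const (V:=R_NormedModule) 0 x zero). replace (scal (x - 0) (zero : R_NormedModule)) with (zero : R_NormedModule) in H by (unfold scal, zero; simpl; unfold mult; simpl; ring).
    eapply is_RInt_ext. 2: apply H.
    intros t _. rewrite sum_n_m_zero by lia. reflexivity.
  - rewrite sum_n_Sm by lia.
    eapply is_RInt_ext. 2: apply (is_RInt_plus _ _ _ _ _ _ IH (term_int (a (S m)) (S m) x ltac:(lia))).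
    intros t _. rewrite sum_n_Sm by lia. reflexivity.
Qed.

Lemma smul (a : R) u n m : a * sum_n_m u n m = sum_n_m (fun k => a * u k) n m.
Proof. symmetry. apply (sum_n_m_mult_l (K:=R_Ring)). Qed.
Lemma splus (u v : nat -> R) n m : sum_n_m (fun k => u k + v k) n m = sum_n_m u n m + sum_n_m v n m.
Proof. apply (sum_n_m_plus (G:=R_AbelianMonoid)). Qed.

Lemma S2_n0 lam m : (1 <= m)%nat -> S2 lam m 0 = 0.
Proof. intros; destruct m; [lia|reflexivity]. Qed.

Lemma Fub_shift lam m x : (1 <= m)%nat ->
  Fub lam m x = sum_n_m (fun k => S2 lam m k * INR (fact k) * x^k) 1 (S m).
Proof.
  intros Hm. unfold Fub, sum_n. rewrite sum_Sn_m by lia. rewrite sum_n_Sm by lia.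
  rewrite S2_n0 by lia. rewrite (S2_high lam m (S m)) by lia.
  unfold plus; simpl. ring.
Qed.

Lemma xFub lam m x :
  x * Fub lam m x = sum_n_m (fun k => S2 lam m (k-1) * INR (fact (k-1)) * x^k) 1 (S m).
Proof.
  unfold Fub, sum_n. rewrite <- sum_n_m_S.
  rewrite smul. apply sum_n_m_ext_loc. intros k _.
  replace (S k - 1)%nat with k by lia. unfold mult; simpl. ring.
Qed.

Lemma Fub_div lam m t : (1 <= m)%nat -> t <> 0 ->
  Fub lam m t / t = sum_n_m (fun k => (S2 lam m k * INR (fact (k-1))) * INR k * t^(k-1)) 1 m.
Proof.
  intros Hm Ht. unfold Fub, sum_n. rewrite sum_Sn_m by lia. rewrite S2_n0 by lia.
  assert (E : sum_n_m (fun k => S2 lam m k * INR (fact k) * t ^ k) 1 m =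
     t * sum_n_m (fun k => (S2 lam m k * INR (fact (k-1))) * INR k * t^(k-1)) 1 m).
  { rewrite smul.
    apply sum_n_m_ext_loc. intros k Hk. destruct k as [|j]; [lia|].
    replace (S j - 1)%nat with j by lia.
    change (fact (S j)) with (S j * fact j)%nat. rewrite mult_INR, S_INR. simpl pow. match goal with |- ?a = ?b => change (@eq R a b) end; ring. }
  rewrite E. unfold plus; simpl. field. auto.
Qed.

Theorem theorem13 (lam : R) (n : nat) (hlam : lam <> 0) (hn : (1 <= n)%nat) :
  (forall x : R,
     (1 + x) * Fub lam n x =
     sum_n_m (fun k => S2 lam (S n) k * INR (fact (k - 1)) * x ^ k) 1 (S n)
     + INR n * lam * sum_n_m (fun k => S2 lam n k * INR (fact (k - 1)) * x ^ k) 1 n)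
  /\
  (forall x : R,
     RInt (fun t => Fub lam (S n) t / t) 0 x
     + INR n * lam * RInt (fun t => Fub lam n t / t) 0 x
     = (1 + x) * Fub lam n x).
Proof.
  assert (P1 : forall x : R,
     (1 + x) * Fub lam n x =
     sum_n_m (fun k => S2 lam (S n) k * INR (fact (k - 1)) * x ^ k) 1 (S n)
     + INR n * lam * sum_n_m (fun k => S2 lam n k * INR (fact (k - 1)) * x ^ k) 1 n).
  { intros x. rewrite Rmult_plus_distr_r, Rmult_1_l. rewrite xFub. rewrite Fub_shift by lia.
    assert (E : sum_n_m (fun k => S2 lam n k * INR (fact (k - 1)) * x ^ k) 1 n
      = sum_n_m (fun k => S2 lam n k * INR (fact (k - 1)) * x ^ k) 1 (S n)).
    { rewrite (sum_n_Sm _ 1 n) by lia. rewrite (S2_high lam n (S n)) by lia.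
      rewrite !Rmult_0_l. symmetry; apply (plus_zero_r (G:=R_AbelianMonoid)). }
    rewrite E, smul. rewrite <- !splus.
    apply sum_n_m_ext_loc. intros k Hk. destruct k as [|j]; [lia|].
    replace (S j - 1)%nat with j by lia. cbn [S2].
    change (fact (S j)) with (S j * fact j)%nat. rewrite mult_INR, S_INR. simpl pow. match goal with |- ?a = ?b => change (@eq R a b) end; ring. }
  split; [exact P1|].
  intros x. rewrite P1.
  assert (I : forall m, (1 <= m)%nat -> RInt (fun t => Fub lam m t / t) 0 x =
        sum_n_m (fun k => S2 lam m k * INR (fact (k - 1)) * x ^ k) 1 m).
  { intros m Hm. apply is_RInt_unique.
    eapply is_RInt_ext. 2: apply (poly_int (fun k => S2 lam m k * INR (fact (k - 1))) x m).
    intros t Ht. simpl. rewrite Fub_div; auto.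
    destruct (Rle_dec 0 x).
    - rewrite Rmin_left in Ht by lra. lra.
    - rewrite Rmax_left in Ht by lra. lra. }
  rewrite !I by lia. reflexivity.
Qed.
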